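(* With the notation of the context, suppose $\delta\in(0,1/2]$ and $\alpha=\frac{1}{\log_2(1/\delta)}$ (so $\alpha\le 1$), and $\frac{\delta}{\log_2(1/\delta)} = 4\kappa\sqrt N + \frac{1}{\sqrt N}$. Then $\mathcal W(x^* )\le -\frac{1}{\sqrt N}$.
   Context: Let $v_1,\dots,v_N$ be an orthonormal family in $\mathbb{R}^d$ and $x^*=-\frac{1}{\sqrt N}\sum_{i=1}^N v_i$. Let $\kappa>0$, $\delta\in(0,1)$, $\alpha>0$. Correlation cones: $C_i=\{x\ne 0: |v_i\cdot x|/\|x\|\ge \kappa\}$. Let $h(x)=2\|x\|^{1+\alpha}$, $\Omega=\{x\in\mathbb{R}^d: \|x\|\in[\delta,1],\ x\notin C_i \text{ for all } i\in[N]\}$, and wall function $\mathcal W(x)=\sup_{y\in\Omega}\{h(y)+\nabla h(y)\cdot(x-y)\}$ (supremum of the empty set is $-\infty$). *)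

(* Defs.v *)
From Stdlib Require Import Reals Lra List.
Import ListNotations.
Open Scope R_scope.

(* Vectors of R^d are represented as functions nat -> R; only the
   coordinates 0..d-1 are ever used. *)
Definition vec := nat -> R.

Definition fsum (n : nat) (f : nat -> R) : R :=
  fold_right Rplus 0 (map f (seq 0 n)).

Definition dot (d : nat) (x y : vec) : R := fsum d (fun k => x k * y k).
Definition norm (d : nat) (x : vec) : R := sqrt (dot d x x).

Definition vadd (x y : vec) : vec := fun k => x k + y k.
Definition vsub (x y : vec) : vec := fun k => x k - y k.
Definition vscale (c : R) (x : vec) : vec := fun k => c * x k.
Definition is_zero (d : nat) (x : vec) : Prop := forall k, (k < d)%nat -> x k = 0.

(* v_1..v_N (indexed 0..N-1) orthonormal in R^d *)
Definition orthonormal (d N : nat) (v : nat -> vec) : Prop :=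
  forall i j, (i < N)%nat -> (j < N)%nat ->
    dot d (v i) (v j) = if Nat.eqb i j then 1 else 0.

Definition xstar (N : nat) (v : nat -> vec) : vec :=
  fun k => - (1 / sqrt (INR N)) * fsum N (fun i => v i k).

Definition in_cone (d : nat) (kappa : R) (vi x : vec) : Prop :=
  ~ is_zero d x /\ Rabs (dot d vi x) / norm d x >= kappa.

Definition in_Omega (d N : nat) (v : nat -> vec) (kappa delta : R) (x : vec) : Prop :=
  delta <= norm d x <= 1 /\ forall i, (i < N)%nat -> ~ in_cone d kappa (v i) x.

Definition h (d : nat) (alpha : R) (x : vec) : R :=
  2 * Rpower (norm d x) (1 + alpha).

Definition grad_h (d : nat) (alpha : R) (y : vec) : vec :=
  vscale (2 * (1 + alpha) * Rpower (norm d y) (alpha - 1)) y.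

Definition tangent (d : nat) (alpha : R) (y x : vec) : R :=
  h d alpha y + dot d (grad_h d alpha y) (vsub x y).

(* W(x) <= c, where W(x) = sup_{y in Omega} tangent y x (sup of empty set = -oo):
   by definition of the supremum this says every y in Omega has tangent <= c. *)
Definition W_le (d N : nat) (v : nat -> vec) (kappa delta alpha : R) (x : vec) (c : R) : Prop :=
  forall y, in_Omega d N v kappa delta y -> tangent d alpha y x <= c.

Definition log2 (t : R) : R := ln t / ln 2.

(* Main.v *)
Require Import Defs.
From Stdlib Require Import Reals Lra Lia List.
Open Scope R_scope.

Section L.
Lemma fsl_add (l : list nat) (f g : nat -> R) :
  fold_right Rplus 0 (map (fun k => f k + g k) l) =
  fold_right Rplus 0 (map f l) + fold_right Rplus 0 (map g l).
Proof. induction l; simpl; lra. Qed.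

Lemma fsl_scale (l : list nat) (c : R) (f : nat -> R) :
  fold_right Rplus 0 (map (fun k => c * f k) l) = c * fold_right Rplus 0 (map f l).
Proof. induction l; simpl; nra. Qed.

Lemma fsl_ext (l : list nat) (f g : nat -> R) :
  (forall k, In k l -> f k = g k) ->
  fold_right Rplus 0 (map f l) = fold_right Rplus 0 (map g l).
Proof.
  induction l; simpl; intros H; auto.
  rewrite H by auto. rewrite IHl; auto.
Qed.

Lemma fsl_exch (l1 l2 : list nat) (g : nat -> nat -> R) :
  fold_right Rplus 0 (map (fun k => fold_right Rplus 0 (map (fun i => g i k) l2)) l1) =
  fold_right Rplus 0 (map (fun i => fold_right Rplus 0 (map (fun k => g i k) l1)) l2).
Proof.
  induction l1; simpl.
  - induction l2; simpl; lra.
  - rewrite IHl1. rewrite <- fsl_add. reflexivity.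
Qed.

Lemma fsl_bound (l : list nat) (f : nat -> R) (b : R) :
  (forall k, In k l -> Rabs (f k) <= b) ->
  Rabs (fold_right Rplus 0 (map f l)) <= INR (length l) * b.
Proof.
  induction l; cbn [length map fold_right]; intros H.
  - simpl; rewrite Rabs_R0; lra.
  - rewrite S_INR.
    assert (H1 := H a (or_introl eq_refl)).
    assert (H2' : forall k, In k l -> Rabs (f k) <= b) by (intros; apply H; right; auto).
    assert (H2 : Rabs (fold_right Rplus 0 (map f l)) <= INR (length l) * b) by auto.
    assert (0 <= b) by (eapply Rle_trans; [apply Rabs_pos|exact H1]).
    eapply Rle_trans; [apply Rabs_triang|]. lra.
Qed.

Lemma fsl_nonneg (l : list nat) (f : nat -> R) :
  (forall k, 0 <= f k) -> 0 <= fold_right Rplus 0 (map f l).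
Proof. intros H; induction l; simpl; [lra|]. specialize (H a); lra. Qed.
End L.

Theorem mainTheorem2 (d N : nat) (v : nat -> vec) (kappa delta alpha : R)
  (HN : (1 <= N)%nat)
  (Hv : orthonormal d N v)
  (Hkappa : 0 < kappa)
  (Hdelta : 0 < delta <= 1/2)
  (Halpha : alpha = 1 / log2 (1 / delta))
  (Hrel : delta / log2 (1 / delta) = 4 * kappa * sqrt (INR N) + 1 / sqrt (INR N)) :
  W_le d N v kappa delta alpha (xstar N v) (- (1 / sqrt (INR N))).
Proof.
  intros y [[Hr1 Hr2] Hcone].
  set (r := norm d y) in *.
  assert (Hr0 : 0 < r) by lra.
  assert (Hln2 : 0 < ln 2) by (rewrite <- ln_1; apply ln_increasing; lra).
  assert (HL : ln (1/delta) = - ln delta) by (unfold Rdiv; rewrite Rmult_1_l, ln_Rinv by lra; lra).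
  assert (HLd : ln 2 <= ln (1/delta)).
  { assert (H2 : 2 <= 1/delta).
    { apply (Rmult_le_reg_r delta); [lra|].
      unfold Rdiv; rewrite Rmult_assoc, Rinv_l by lra. lra. }
    destruct (Rle_lt_or_eq_dec _ _ H2) as [Hl|He].
    - left; apply ln_increasing; lra.
    - rewrite He; lra. }
  set (L := ln (1/delta)) in *.
  assert (Ha : alpha = ln 2 / L).
  { rewrite Halpha; unfold log2. fold L. field. lra. }
  assert (Hapos : 0 < alpha) by (rewrite Ha; apply Rdiv_lt_0_compat; lra).
  assert (Hale : alpha <= 1).
  { rewrite Ha. apply (Rmult_le_reg_r L); [lra|].
    unfold Rdiv; rewrite Rmult_assoc, Rinv_l by lra. lra. }
  assert (Had : alpha * delta = 4 * kappa * sqrt (INR N) + 1 / sqrt (INR N)).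
  { rewrite <- Hrel, Ha. unfold log2. fold L. field. lra. }
  set (p := Rpower r alpha).
  assert (Hp1 : p <= 1).
  { unfold p, Rpower. rewrite <- exp_0. apply exp_le_3 || idtac.
    destruct (Rle_lt_or_eq_dec _ _ Hr2) as [Hlt|Heq].
    - left. apply exp_increasing. assert (ln r < 0) by (rewrite <- ln_1; apply ln_increasing; lra). nra.
    - right. rewrite Heq, ln_1. f_equal; ring. }
  assert (Hp2 : 1/2 <= p).
  { unfold p, Rpower.
    assert (E : exp (alpha * ln delta) = 1/2).
    { rewrite Ha. replace (ln 2 / L * ln delta) with (- ln 2) by (rewrite HL; field; lra).
      rewrite exp_Ropp, exp_ln by lra. lra. }
    rewrite <- E. destruct (Rle_lt_or_eq_dec _ _ Hr1) as [Hlt|Heq].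
    - left. apply exp_increasing. assert (ln delta < ln r) by (apply ln_increasing; lra). nra.
    - right. rewrite Heq. reflexivity. }
  assert (E1 : Rpower r (1 + alpha) = r * p).
  { rewrite Rpower_plus, Rpower_1 by lra. reflexivity. }
  assert (E2 : Rpower r (alpha - 1) = p / r).
  { unfold Rminus. rewrite Rpower_plus, Rpower_Ropp, Rpower_1 by lra. reflexivity. }
  assert (Hdd : 0 <= dot d y y) by (apply fsl_nonneg; intro k; nra).
  assert (Hrr : dot d y y = r * r) by (unfold r, norm; rewrite sqrt_sqrt; auto).
  assert (Hnz : ~ is_zero d y).
  { intro Hz. assert (dot d y y = 0).
    { unfold dot, fsum. rewrite (fsl_ext _ _ (fun _ => 0)).
      - clear. induction (seq 0 d); simpl; lra.
      - intros k Hk. apply in_seq in Hk. rewrite Hz by lia. ring. }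
    nra. }
  assert (Hsq : 0 < sqrt (INR N)).
  { apply sqrt_lt_R0. apply lt_0_INR. lia. }
  set (s := dot d y (xstar N v)).
  assert (Hs : s = - (1 / sqrt (INR N)) * fsum N (fun i => dot d (v i) y)).
  { unfold s, dot, xstar, fsum.
    rewrite (fsl_ext _ _ (fun k => - (1 / sqrt (INR N)) * fold_right Rplus 0 (map (fun i => v i k * y k) (seq 0 N)))).
    - rewrite fsl_scale. f_equal. apply fsl_exch.
    - intros k _. rewrite (fsl_ext _ (fun i => v i k * y k) (fun i => y k * v i k)) by (intros; ring).
      rewrite fsl_scale. ring. }
  assert (Hsum : Rabs (fsum N (fun i => dot d (v i) y)) <= INR N * (kappa * r)).
  { unfold fsum at 1. replace (INR N) with (INR (length (seq 0 N))) by (rewrite length_seq; auto).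
    apply fsl_bound. intros i Hi. apply in_seq in Hi.
    assert (Hc := Hcone i ltac:(lia)). unfold in_cone in Hc. fold r in Hc.
    assert (~ (Rabs (dot d (v i) y) / r >= kappa)) by tauto.
    assert (Rabs (dot d (v i) y) / r < kappa) by lra.
    apply Rlt_le. apply (Rmult_lt_reg_r (/ r)); [apply Rinv_0_lt_compat; lra|].
    replace (kappa * r * / r) with kappa by (field; lra). exact H0. }
  assert (HNs : INR N = sqrt (INR N) * sqrt (INR N)) by (rewrite sqrt_sqrt; auto; apply pos_INR).
  assert (Hsb : s <= sqrt (INR N) * kappa * r).
  { rewrite Hs. assert (Hsum2 := Rle_abs (- fsum N (fun i => dot d (v i) y))); rewrite Rabs_Ropp in Hsum2.
    set (S := fsum N _) in *.
    set (q := sqrt (INR N)) in *.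
    assert (Hq : 0 < 1 / q) by (apply Rdiv_lt_0_compat; lra).
    assert (Hb : - S <= q * q * (kappa * r)) by (rewrite <- HNs; lra).
    replace (- (1 / q) * S) with ((1/q) * (- S)) by ring.
    apply Rle_trans with ((1/q) * (q * q * (kappa * r))).
    - apply Rmult_le_compat_l; lra.
    - right. field. lra. }
  assert (Ht : tangent d alpha y (xstar N v) =
               - 2 * alpha * r * p + 2 * (1 + alpha) * (p / r) * s).
  { unfold tangent, h, grad_h. fold r. rewrite E1, E2.
    unfold dot at 1, vscale, vsub, fsum.
    rewrite (fsl_ext _ _ (fun k => (2 * (1 + alpha) * (p / r)) * ((y k * xstar N v k) + (-1) * (y k * y k)))) by (intros; ring).
    rewrite fsl_scale, fsl_add, fsl_scale.
    change (fold_right Rplus 0 (map (fun k => y k * xstar N v k) (seq 0 d))) with s.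
    change (fold_right Rplus 0 (map (fun k => y k * y k) (seq 0 d))) with (dot d y y).
    rewrite Hrr. field. lra. }
  rewrite Ht.
  assert (T1 : 2 * (1 + alpha) * (p / r) * s <= 4 * kappa * sqrt (INR N)).
  { assert (0 <= p / r) by (unfold Rdiv; apply Rmult_le_pos; [lra|left; apply Rinv_0_lt_compat; lra]).
    apply Rle_trans with (2 * (1 + alpha) * (p / r) * (sqrt (INR N) * kappa * r)).
    - apply Rmult_le_compat_l; [nra|]. exact Hsb.
    - replace (2 * (1 + alpha) * (p / r) * (sqrt (INR N) * kappa * r))
        with ((1 + alpha) * p * (2 * kappa * sqrt (INR N))) by (field; lra).
      assert (0 < 2 * kappa * sqrt (INR N)) by nra.
      assert ((1 + alpha) * p <= 2) by nra. nra. }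
  assert (T2a : delta <= 2 * r * p) by nra.
  assert (T2 : - 2 * alpha * r * p <= - (alpha * delta)).
  { assert (alpha * delta <= alpha * (2 * r * p)) by (apply Rmult_le_compat_l; lra). lra. }
  lra.
Qed.
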